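(* Let $n\ge 1$, $D\ge 1$, and let $X_n=\{\mathbf{x}^0,\ldots,\mathbf{x}^{n-1}\}\subseteq\{0,1\}^D$ consist of $n$ pairwise distinct vectors. Then there is a three-layer Boolean threshold network with $D$ input nodes, $D^2$ hidden nodes and $2\lceil\log_2 n\rceil$ output nodes whose computed map $\mathbf{f}:\{0,1\}^D\to\{0,1\}^{2\lceil\log_2 n\rceil}$ satisfies $\mathbf{f}(\mathbf{x}^i)\ne\mathbf{f}(\mathbf{x}^j)$ for all $i\neq j$.
   Context: A Boolean threshold function is a map $\{0,1\}^h\to\{0,1\}$ of the form $\mathbf{u}\mapsto[\mathbf{a}\cdot\mathbf{u}\ge\theta]$ (value $1$ iff $\mathbf{a}\cdot\mathbf{u}\ge\theta$) with $\mathbf{a}\in\mathbb{Z}^h$, $\theta\in\mathbb{Z}$. An $L$-layer Boolean threshold network has layers $1,\ldots,L$ of given sizes; layer $1$ is the input; for $t=1,\ldots,L-1$, each node of layer $t+1$ takes as value a Boolean threshold function of the vector of values of layer $t$. The network computes the map from the input vector to the vector of values of layer $L$. Layers $2,\ldots,L-1$ are hidden layers. *)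

(* Defs.v *)
From mathcomp Require Import all_boot all_order all_algebra.
Set Implicit Arguments. Unset Strict Implicit. Unset Printing Implicit Defensive.
Import GRing.Theory Num.Theory.
Local Open Scope ring_scope.

Record thr_fun (h : nat) := ThrFun { thr_w : 'I_h -> int; thr_th : int }.

Definition eval_thr (h : nat) (g : thr_fun h) (u : {ffun 'I_h -> bool}) : bool :=
  thr_th g <= \sum_(i < h) thr_w g i * (u i)%:R.

Definition layer (h m : nat) := 'I_m -> thr_fun h.

Definition eval_layer (h m : nat) (L : layer h m) (u : {ffun 'I_h -> bool})
  : {ffun 'I_m -> bool} := [ffun j => eval_thr (L j) u].

Record net3 (d hid out : nat) := Net3 { net_hidden : layer d hid; net_out : layer hid out }.

Definition net3_map (d hid out : nat) (N : net3 d hid out) (x : {ffun 'I_d -> bool})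
  : {ffun 'I_out -> bool} := eval_layer (net_out N) (eval_layer (net_hidden N) x).

(* ceil(log2 n) for n >= 1 : smallest e with n <= 2^e. *)
Definition ceil_log2 (n : nat) : nat := up_log 2 n.

(* Main.v *)
Require Import Defs.
From mathcomp Require Import all_boot all_order all_algebra.
From mathcomp Require Import zify.
Set Implicit Arguments. Unset Strict Implicit. Unset Printing Implicit Defensive.
Import GRing.Theory Num.Theory.

Section S.
Variable D : nat.
Notation T := {ffun 'I_D -> bool}.

Definition dotn (a x : T) : nat := \sum_(i < D) (a i && x i).

Lemma dotn_le a x : (dotn a x <= D)%N.
Proof.
rewrite /dotn; apply: leq_trans (_ : (\sum_(i < D) 1 <= D)%N).
  by apply: leq_sum => i _; case: (_ && _).
by rewrite sum1_card card_ord.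
Qed.

Lemma alt_sum (s m : nat) :
  (\sum_(t < m) ((-1) ^+ t * (t < s)%:R : int) = (odd (minn s m))%:R)%R.
Proof.
elim: m => [|m IH]; first by rewrite big_ord0 minn0.
rewrite big_ord_recr /= IH.
case: (ltnP m s) => hms.
  rewrite (minn_idPr hms) /= mulr1 -signr_odd.
  by case: (odd m).
by rewrite mulr0 addr0 (minn_idPl (leq_trans hms (leqnSn m))).
Qed.

Definition hidL (r : nat -> T) : layer D (D * D) :=
  fun h => ThrFun (fun i => ((r (h %/ D)%N i : nat)%:R : int)%R) ((h %% D)%N.+1%:R)%R.

Definition outL (K : nat) : layer (D * D) K :=
  fun o => ThrFun (fun h : 'I_(D * D) => if (h %/ D == o) then ((-1) ^+ (h %% D))%R else (0 : int)) 1%R.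

Lemma eval_hid r h x : eval_layer (hidL r) x h = ((h %% D) < dotn (r (h %/ D)) x)%N.
Proof.
rewrite /eval_layer ffunE /eval_thr /=.
have -> : (\sum_(i < D) ((r (h %/ D)%N i : nat)%:R : int) * (x i)%:R = (dotn (r (h %/ D)%N) x)%:R)%R.
  rewrite /dotn natr_sum; apply: eq_bigr => i _.
  by case: (r _ i); case: (x i); rewrite ?mulr0 ?mulr1 ?mul0r.
by rewrite ler_nat.
Qed.

Lemma eval_out K r (o : 'I_K) x : (o < D)%N ->
  net3_map (Net3 (hidL r) (@outL K)) x o = odd (dotn (r o) x).
Proof.
move=> oD.
rewrite /net3_map /= /eval_layer ffunE /eval_thr /=.
set s := dotn (r o) x.
pose G (h : nat) : int := if (h %/ D == o)%N then ((-1) ^+ (h %% D)%N * ((h %% D) < dotn (r (h %/ D)) x)%N%:R)%R else 0%R.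
have -> : (\sum_(i < D * D) (if (i %/ D == o)%N then (-1) ^+ (i %% D)%N else 0) *
    (eval_layer (hidL r) x i)%:R = \sum_(i < D * D) G i)%R.
  apply: eq_bigr => i _; rewrite ffunE -/(eval_layer _ _) /G.
  have := eval_hid r i x; rewrite /eval_layer ffunE => ->.
  by case: ifP; rewrite ?mul0r.
have D0 : (0 < D)%N by apply: leq_ltn_trans oD.
rewrite -(big_mkord xpredT G) (@big_cat_nat _ _ _ (o * D)) //=; last first.
  by rewrite leq_mul2r; apply/orP; right; apply: ltnW.
rewrite [X in (_ + X)%R](@big_cat_nat _ _ _ (o * D + D)) //=; last first.
  by rewrite -mulSnr leq_mul2r; apply/orP; right.
  by apply: leq_addr.
rewrite [X in (X + _)%R]big1_seq ?add0r; last first.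
  move=> h /andP[_]; rewrite mem_index_iota => /andP[_ hl]; rewrite /G.
  by rewrite (_ : (h %/ D == o) = false) //; apply/negbTE; rewrite neq_ltn ltn_divLR // hl.
rewrite [X in (_ + X)%R]big1_seq ?addr0; last first.
  move=> h /andP[_]; rewrite mem_index_iota => /andP[hl _]; rewrite /G.
  rewrite (_ : (h %/ D == o) = false) //; apply/negbTE; rewrite neq_ltn; apply/orP; right.
  by rewrite leq_divRL // mulSn addnC.
rewrite -{1}[o * D]add0n big_addn (addnC (o * D) D) addnK big_mkord.
have -> : (\sum_(t < D) G (t + o * D)%N = \sum_(t < D) ((-1) ^+ t * ((t < s)%N)%:R : int))%R.
  apply: eq_bigr => t _; rewrite /G addnC divnMDl // divn_small // addn0 eqxx.
  by rewrite modnMDl modn_small.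
rewrite alt_sum (minn_idPl (dotn_le _ _)).
by case: (odd s); rewrite ?ler_nat.
Qed.
End S.

Section G.
Variable D : nat.
Notation T := {ffun 'I_D -> bool}.

Definition sep (a x y : T) := odd (dotn a x) != odd (dotn a y).
Definition flip (c : 'I_D) (a : T) : T := [ffun i => if i == c then ~~ a i else a i].

Lemma flipK c : involutive (flip c).
Proof. by move=> a; apply/ffunP => i; rewrite !ffunE; case: eqP => // _; rewrite negbK. Qed.

Lemma flip_odd c a x : odd (dotn (flip c a) x) = x c (+) odd (dotn a x).
Proof.
rewrite /dotn (bigD1 c) //= [in RHS](bigD1 c) //= !oddD ffunE eqxx.
have -> : \sum_(i < D | i != c) (flip c a i && x i) = \sum_(i < D | i != c) (a i && x i).
  by apply: eq_bigr => i /negbTE hi; rewrite ffunE hi.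
move: (odd (\sum_(i < D | i != c) a i && x i)) => b.
by case: (a c); case: (x c); case: b.
Qed.

Lemma card_nonsep x y : x != y -> 2 * #|[set a : T | ~~ sep a x y]| = 2 ^ D.
Proof.
move=> hxy.
have [c hc] : exists c, x c != y c.
  apply/existsP; rewrite -negb_forall; apply: contra hxy => /forallP h.
  by apply/eqP/ffunP => i; apply/eqP: (h i).
set A := [set a : T | ~~ sep a x y].
have hpre : flip c @^-1: A = ~: A.
  apply/setP => a; rewrite !inE /sep !flip_odd negbK.
  move: hc; case: (x c); case: (y c) => //= _;
  by case: (odd (dotn a x)); case: (odd (dotn a y)).
have := cardsC A; rewrite -hpre card_preimset; last exact: (can_inj (flipK c)).
by rewrite card_ffun card_bool card_ord mul2n -addnn => ->.
Qed.

Lemma card_setP (I : finType) (P : {set I}) (Q : pred I) :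
  #|[set p in P | Q p]| = \sum_(p in P) Q p.
Proof.
rewrite -sum1_card (eq_bigl (fun p => (p \in P) && Q p)); last by move=> p; rewrite !inE.
by rewrite big_mkcondr; apply: eq_bigr => p _; case: (Q p).
Qed.

Lemma sum_bool_card (I : finType) (Q : pred I) : \sum_(a : I) Q a = #|[set a | Q a]|.
Proof. by rewrite -sum1dep_card [RHS]big_mkcond; apply: eq_bigr => a _; case: (Q a). Qed.

Variable n : nat.
Variable X : 'I_n -> T.

Definition sepp a (p : 'I_n * 'I_n) := sep a (X p.1) (X p.2).

Lemma greedy m : forall P : {set 'I_n * 'I_n},
  (forall p, p \in P -> X p.1 != X p.2) -> #|P| < 2 ^ m ->
  exists r : nat -> T, forall p, p \in P -> exists2 j, j < m & sepp (r j) p.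
Proof.
elim: m => [|m IH] P hP hc.
  exists (fun _ => [ffun => false]) => p hp; exfalso.
  by move: hc; rewrite expn0 ltnS leqn0 => /eqP /cards0_eq hP0; rewrite hP0 in_set0 in hp.
have [a ha] : exists a, 2 * #|[set p in P | ~~ sepp a p]| <= #|P|.
  case: (boolP [exists a, 2 * #|[set p in P | ~~ sepp a p]| <= #|P|]) => [/existsP//|/existsPn hall].
  exfalso.
  have hsum : \sum_(a : T) 2 * #|[set p in P | ~~ sepp a p]| = #|P| * 2 ^ D.
    rewrite -big_distrr /=.
    under eq_bigr => a _ do rewrite card_setP.
    rewrite exchange_big /= big_distrr /=.
    under eq_bigr => p hp.
      have -> : \sum_(a : T) ~~ sepp a p = #|[set a : T | ~~ sep a (X p.1) (X p.2)]|.
        exact: (sum_bool_card (fun a => ~~ sepp a p)).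
      rewrite card_nonsep; last exact: hP.
    over.
    by rewrite sum_nat_const.
  have : \sum_(a : T) #|P|.+1 <= \sum_(a : T) 2 * #|[set p in P | ~~ sepp a p]|.
    by apply: leq_sum => a _; rewrite ltnNge; apply: hall.
  rewrite hsum sum_nat_const.
  have -> : #|(xpredT : pred T)| = 2 ^ D by rewrite cardT -cardE card_ffun card_bool card_ord.
  have : 0 < 2 ^ D by rewrite expn_gt0.
  move: (2 ^ D) => z; nia.
set P' := [set p in P | ~~ sepp a p].
have h1 : forall p, p \in P' -> X p.1 != X p.2.
  by move=> p; rewrite inE => /andP[hp _]; apply: hP.
have h2 : #|P'| < 2 ^ m.
  by move: ha hc; rewrite expnS -/P'; move: (2 ^ m) => z; lia.
have [r' hr'] := IH P' h1 h2.
exists (fun j => if j is j'.+1 then r' j' else a) => p hp.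
case: (boolP (sepp a p)) => hs; first by exists 0.
have hpP : p \in P' by rewrite inE hp hs.
have [j hj hsj] := hr' p hpP.
by exists j.+1.
Qed.
End G.

Theorem theorem9 (n D : nat) (hn : (1 <= n)%N) (hD : (1 <= D)%N)
  (X : 'I_n -> {ffun 'I_D -> bool}) (hX : injective X) :
  exists N : net3 D (D * D) (2 * ceil_log2 n),
    forall i j : 'I_n, i != j -> net3_map N (X i) != net3_map N (X j).
Proof.
set k := ceil_log2 n.
have [r hr] : exists r : nat -> {ffun 'I_D -> bool}, forall i j : 'I_n, i != j ->
    exists2 o, (o < 2 * k) && (o < D) & sep (r o) (X i) (X j).
  case: (leqP (2 * k) D) => hkD.
    pose P := [set p : 'I_n * 'I_n | p.1 != p.2].
    have g1 : forall p, p \in P -> X p.1 != X p.2.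
      by move=> p; rewrite inE (inj_eq hX).
    have g2 : #|P| < 2 ^ (2 * k).
      have i0 : 'I_n := Ordinal hn.
      have h1 : #|P| < n * n.
        have : P \proper [set: 'I_n * 'I_n].
          rewrite properT; apply/eqP => hP.
          have : (i0, i0) \in P by rewrite hP inE.
          by rewrite inE eqxx.
        by move/proper_card; rewrite cardsT card_prod card_ord.
      have h2 : n <= 2 ^ k by apply: up_logP.
      apply: (leq_trans h1); rewrite mul2n -addnn expnD.
      exact: leq_mul.
    have [r hr] := @greedy D n X (2 * k) P g1 g2.
    exists r => i j hij.
    have hij' : (i, j) \in P by rewrite inE.
    have [o ho hs] := hr (i, j) hij'.
    by exists o => //; rewrite ho (leq_trans ho hkD).
  exists (fun o => [ffun i : 'I_D => val i == o]) => i j hij.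
  have hx : X i != X j by rewrite (inj_eq hX).
  have [c hc] : exists c, X i c != X j c.
    apply/existsP; rewrite -negb_forall; apply: contra hx => /forallP h.
    by apply/eqP/ffunP => l; apply/eqP: (h l).
  exists (val c).
    by rewrite ltn_ord andbT (ltn_trans (ltn_ord c) hkD).
  have hd : forall x, dotn [ffun l : 'I_D => val l == val c] x = x c.
    move=> x; rewrite /dotn.
    rewrite (eq_bigr (fun l => if l == c then (x l : nat) else 0)); last first.
      by move=> l _; rewrite ffunE val_eqE; case: (l == c).
    by rewrite -big_mkcond big_pred1_eq.
  by rewrite /sep !hd !oddb.
exists (Net3 (hidL r) (@outL D (2 * k))) => i j hij.
have [o /andP[ho hoD] hs] := hr i j hij.
apply/eqP => heq.
have := congr1 (fun f : {ffun 'I_(2 * k) -> bool} => f (Ordinal ho)) heq => /=.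
rewrite !eval_out //.
by move=> h; move: hs; rewrite /sep h eqxx.
Qed.
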